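(* For every positive integer $n$, \[ \mathrm{B}_n=\frac{1}{e}\sum_{k=1}^{n}(-1)^{n-k}\,S(n,k)\,k!\;{}_1F_1(k+1;2;1). \]
   Context: $\mathrm{B}_n$ denotes the $n$-th Bell number, defined by the generating function $e^{e^x-1}=\sum_{k=0}^\infty \mathrm{B}_k\frac{x^k}{k!}$ (equivalently, $\mathrm{B}_n$ is the number of partitions of an $n$-element set into nonempty blocks). $S(n,k)$ denotes the Stirling number of the second kind, $S(n,k)=\frac{1}{k!}\sum_{i=0}^{k}(-1)^i\binom{k}{i}(k-i)^n$. ${}_1F_1(a;b;z)=\sum_{m=0}^\infty \frac{(a)_m}{(b)_m}\frac{z^m}{m!}$ is Kummer's confluent hypergeometric function, where $(a)_0=1$ and $(a)_m=a(a+1)\cdots(a+m-1)$ for $m\ge1$. *)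

(* Defs.v *)
From Stdlib Require Import Reals Arith.
Open Scope R_scope.

Definition stirling2 (n k : nat) : R :=
  / INR (fact k) *
  sum_f_R0 (fun i => (-1) ^ i * C k i * INR (k - i) ^ n) k.

Fixpoint pochhammer (a : R) (m : nat) : R :=
  match m with
  | O => 1
  | S m' => pochhammer a m' * (a + INR m')
  end.

Definition hyp1F1_term (a b z : R) (m : nat) : R :=
  pochhammer a m / pochhammer b m * z ^ m / INR (fact m).

Close Scope R_scope.

From mathcomp Require Import ssreflect ssrbool ssrfun eqtype ssrnat seq
  choice fintype finfun bigop finset.

Definition Bell (n : nat) : nat :=
  #|[set P : {set {set 'I_n}} | partition P [set: 'I_n]]|.

(* Main.v *)
Require Import Defs.
From Stdlib Require Import Reals Arith.
Open Scope R_scope.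
From Stdlib Require Lia Lra.
From mathcomp Require ssreflect ssrbool ssrfun eqtype ssrnat seq
  choice fintype finfun bigop finset binomial.
From Coquelicot Require Coquelicot.

Module Comb.
Local Close Scope R_scope.
From mathcomp Require Import ssreflect ssrbool ssrfun eqtype ssrnat seq
  choice fintype finfun bigop finset binomial.
Local Set Implicit Arguments. Local Unset Strict Implicit.

Definition parts (T : finType) (A : {set T}) := #|[set P : {set {set T}} | partition P A]|.

Lemma parts_set0 (T : finType) : parts (set0 : {set T}) = 1.
Proof.
rewrite /parts (_ : [set P | partition P set0] = [set set0]) ?cards1 //.
by apply/setP => P; rewrite !inE partition_set0.
Qed.

Lemma parts_fiber (T : finType) (A B : {set T}) x : x \in B -> B \subset A ->
  #|[set P | partition P A & pblock P x == B]| = parts (A :\: B).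
Proof.
move=> xB BA.
have B0 : B != set0 by apply/set0Pn; exists x.
have dis : [disjoint B & A :\: B].
  by rewrite -setI_eq0; apply/eqP/setP => y; rewrite !inE; case: (y \in B).
have BU : B :|: (A :\: B) = A.
  apply/setP => y; rewrite !inE; case yB: (y \in B) => //=.
  by rewrite (subsetP BA).
have BnQ : forall Q, partition Q (A :\: B) -> B \notin Q.
  move=> Q pQ; apply/negP => BQ; have := partitionS pQ BQ.
  by move/subsetP/(_ x xB); rewrite !inE xB.
rewrite /parts -[in RHS](@card_in_imset _ _ (fun Q => B |: Q)); last first.
  move=> Q1 Q2; rewrite !inE => p1 p2 /= e.
  by rewrite -(setU1K (BnQ _ p1)) -(setU1K (BnQ _ p2)) e.
apply: eq_card => P; rewrite !inE; apply/andP/imsetP.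
  case=> pP /eqP pb.
  have xc : x \in cover P by rewrite (cover_partition pP) (subsetP BA).
  have BP : B \in P by rewrite -pb pblock_mem.
  exists (P :\ B); first by rewrite inE partitionD1.
  by rewrite setD1K.
case=> Q; rewrite inE => pQ ->.
have pU := partitionU1 pQ B0 dis; rewrite BU in pU.
split => //; apply/eqP/def_pblock => //; first exact: partition_trivIset pU.
by rewrite setU11.
Qed.

Lemma parts_split (T : finType) (A : {set T}) x : x \in A ->
  parts A = \sum_(B : {set T} | (x \in B) && (B \subset A)) parts (A :\: B).
Proof.
move=> xA; rewrite /parts -sum1dep_card.
rewrite (partition_big (fun P => pblock P x) (fun B : {set T} => (x \in B) && (B \subset A))); last first.
  move=> P pP; have xc : x \in cover P by rewrite (cover_partition pP).
  by rewrite mem_pblock xc (partitionS pP) // pblock_mem.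
apply: eq_bigr => B /andP[xB BA].
by rewrite sum1dep_card; apply: parts_fiber.
Qed.

Definition symd (T : finType) (A R : {set T}) := (A :\: R) :|: (R :\: A).

Lemma symdK (T : finType) (A : {set T}) : involutive (symd A).
Proof.
move=> R; apply/setP => y; rewrite !inE.
by case: (y \in A); case: (y \in R).
Qed.

Lemma parts_split2 (T : finType) (A : {set T}) x : x \in A ->
  parts A = \sum_(R : {set T} | R \subset A :\ x) parts R.
Proof.
move=> xA; rewrite (parts_split xA).
rewrite (reindex (symd A)); last by exists (symd A) => R _; apply: symdK.
apply: eq_big => R.
  apply/andP/idP.
    case; rewrite /symd !inE => H sub; rewrite xA andbT /= orbF in H.
    apply/subsetP => y yR; rewrite !inE.
    have yA : y \in A.
      apply/negPn/negP => yA; have := subsetP sub y.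
      by rewrite !inE yR yA /= => /(_ isT); apply/negP.
    rewrite yA andbT; apply/eqP => e; subst y.
    by rewrite yR in H.
  move=> sub; have RA : R \subset A.
    by apply: subset_trans sub _; apply: subsetDl.
  split.
    rewrite !inE xA andbT; apply/orP; left; apply/negP => xR.
    by have := subsetP sub x xR; rewrite !inE eqxx.
  apply/subsetP => y; rewrite !inE; case/orP => /andP[]//.
  by move=> nA yR; rewrite (subsetP RA) in nA.
case/andP=> _ sub; have RA : R \subset A.
  apply/subsetP => y yR; apply/negPn/negP => nA.
  by have := subsetP sub y; rewrite /symd !inE yR nA /= => /(_ isT); apply/negP.
congr parts; apply/setP => y; rewrite !inE.
case yR: (y \in R); last by case: (y \in A).
by rewrite (subsetP RA).
Qed.

Lemma sum_by_card (T : finType) (D : {set T}) (f : nat -> nat) :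
  \sum_(R : {set T} | R \subset D) f #|R| = \sum_(k < #|D|.+1) 'C(#|D|, k) * f k.
Proof.
rewrite (partition_big (fun R : {set T} => (inord #|R| : 'I_#|D|.+1)) xpredT) //.
apply: eq_bigr => k _.
rewrite -cards_draws -sum1dep_card big_distrl /=.
apply: eq_big => R.
  apply/andP/andP; case=> sub /eqP e; split => //; apply/eqP.
    by rewrite -e inordK // ltnS subset_leq_card.
  by apply: val_inj; rewrite /= inordK ?e // ltnS subset_leq_card.
by case/andP => sub /eqP <-; rewrite inordK ?mul1n // ltnS subset_leq_card.
Qed.

Lemma parts_rec (T : finType) (A : {set T}) x : x \in A ->
  (forall R : {set T}, R \subset A :\ x -> parts R = Bell #|R|) ->
  parts A = \sum_(k < #|A|) 'C(#|A|.-1, k) * Bell k.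
Proof.
move=> xA IH; rewrite (parts_split2 xA).
rewrite (eq_bigr (fun R : {set T} => Bell #|R|)); last by move=> R /IH.
rewrite sum_by_card.
have -> : #|A :\ x| = #|A|.-1 by rewrite (cardsD1 x A) xA.
have : 0 < #|A| by apply/card_gt0P; exists x.
by case: #|A|.
Qed.

Lemma Bell0 : Bell 0 = 1.
Proof.
rewrite /Bell (_ : [set: 'I_0] = set0); first exact: parts_set0.
by apply/setP => -[].
Qed.

Lemma parts_Bell n (T : finType) (A : {set T}) : #|A| <= n -> parts A = Bell #|A|.
Proof.
elim: n T A => [|n IH] T A.
  rewrite leqn0 cards_eq0 => /eqP ->; by rewrite parts_set0 cards0 Bell0.
move=> An.
have [A0|[x xA]] := set_0Vmem A.
  by rewrite A0 parts_set0 cards0 Bell0.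
have IHA : forall R : {set T}, R \subset A :\ x -> parts R = Bell #|R|.
  move=> R sub; apply: IH; rewrite -ltnS.
  apply: leq_trans An; apply: leq_ltn_trans (subset_leq_card sub) _.
  by rewrite (cardsD1 x A) xA.
rewrite (parts_rec xA IHA).
have cA : 0 < #|A| by apply/card_gt0P; exists x.
case: #|A| cA An => // m _ mn.
rewrite /Bell -[m.+1 in LHS]card_ord -cardsT.
rewrite -/(parts [set: 'I_m.+1]) (@parts_rec _ _ ord0) ?inE //.
move=> R sub; apply: IH; rewrite -ltnS.
apply: leq_trans mn; apply: leq_ltn_trans (subset_leq_card sub) _.
by rewrite setTD cardsC1 card_ord.
Qed.

Lemma Bell_rec n : Bell n.+1 = \sum_(k < n.+1) 'C(n, k) * Bell k.
Proof.
rewrite {1}/Bell -/(parts [set: 'I_n.+1]) (@parts_rec _ _ ord0) ?inE //.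
  by rewrite cardsT card_ord.
move=> R _; apply: (parts_Bell (n := #|R|)) => //.
Qed.

Fixpoint nsum (f : nat -> nat) (N : nat) : nat :=
  match N with O => f O | S N' => Nat.add (nsum f N') (f N) end.

Lemma big_nsum (f : nat -> nat) N : \sum_(k < N.+1) f k = nsum f N.
Proof.
elim: N => [|N IH]; first by rewrite big_ord_recr big_ord0.
by rewrite big_ord_recr /= IH.
Qed.

Lemma Bell_rec' n : Bell (S n) = nsum (fun k => Nat.mul (binomial n k) (Bell k)) n.
Proof. by rewrite Bell_rec (big_nsum (fun k => 'C(n,k) * Bell k)). Qed.

Lemma factorialE n : factorial n = Factorial.fact n.
Proof. by elim: n => //= n IH; rewrite factS IH. Qed.

Lemma bin_fact' n k : (k <= n)%coq_nat ->
  Nat.mul (binomial n k) (Nat.mul (Factorial.fact k) (Factorial.fact (Nat.sub n k))) = Factorial.fact n.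
Proof.
move/leP => kn; rewrite -!factorialE.
by have := bin_fact kn.
Qed.

Definition binC := binomial.
Lemma Bell_rec2 n : Bell (S n) = nsum (fun k => Nat.mul (binC n k) (Bell k)) n.
Proof. exact: Bell_rec'. Qed.
Lemma bin_fact2 n k : (k <= n)%coq_nat ->
  Nat.mul (binC n k) (Nat.mul (Factorial.fact k) (Factorial.fact (Nat.sub n k))) = Factorial.fact n.
Proof. exact: bin_fact'. Qed.

End Comb.

Module Ana.
Import Comb.
From Stdlib Require Import Lia Lra.
From Coquelicot Require Import Coquelicot.
Open Scope R_scope.
Notation BC := Binomial.C.


Lemma INR_bin n k : (k <= n)%nat -> INR (binC n k) = BC n k.
Proof.
  intros H. unfold Binomial.C.
  pose proof (bin_fact2 H) as E.
  apply (f_equal INR) in E. rewrite !mult_INR in E.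
  rewrite <- E. field. split; apply INR_fact_neq_0.
Qed.

Lemma INR_nsum f N : INR (nsum f N) = sum_f_R0 (fun k => INR (f k)) N.
Proof.
  induction N; [reflexivity|].
  change (nsum f (S N)) with (Nat.add (nsum f N) (f (S N))).
  rewrite plus_INR, IHN. reflexivity.
Qed.

Lemma series_fsum (a : nat -> nat -> R) (l : nat -> R) N :
  (forall k, (k <= N)%nat -> is_series (a k) (l k)) ->
  is_series (fun m => sum_f_R0 (fun k => a k m) N) (sum_f_R0 l N).
Proof.
  induction N; intros H; simpl.
  - apply H; lia.
  - apply (is_series_plus (fun m => sum_f_R0 (fun k => a k m) N) (a (S N))).
    + apply IHN; intros; apply H; lia.
    + apply H; lia.
Qed.

Lemma series_scal (c : R) (a : nat -> R) (l : R) : is_series a l -> is_series (fun m => c * a m) (c * l).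
Proof. intros H. apply (is_series_scal c a l H). Qed.

Lemma series_exp1 : is_series (fun j => 1 / INR (fact j)) (exp 1).
Proof.
  unfold exp. destruct (exist_exp 1) as [l Hl]. simpl.
  apply is_series_Reals in Hl.
  eapply is_series_ext; [|exact Hl]. intros i. simpl. rewrite pow1. field. apply INR_fact_neq_0.
Qed.

Definition dterm n j := INR j ^ n / INR (fact j).

Lemma series_shift (a : nat -> R) (l : R) : is_series (fun k => a (S k)) l -> a O = 0 -> is_series a l.
Proof.
  intros H H0. apply is_series_decr_1.
  rewrite H0. match goal with |- is_series _ ?v => replace v with l end; [exact H|].
  change (l = Rplus l (Ropp 0)). ring.
Qed.

Lemma dob_all : forall N n, (n <= N)%nat -> is_series (dterm n) (INR (Bell n) * exp 1).
Proof.
  induction N; intros n Hn.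
  - replace n with O by lia. rewrite Bell0. simpl INR.
    replace (1 * exp 1) with (exp 1) by ring.
    eapply is_series_ext; [|exact series_exp1]. intros j. unfold dterm. simpl pow. reflexivity.
  - destruct (Nat.eq_dec n (S N)) as [->|Hne]; [|apply IHN; lia].
    apply series_shift; [| unfold dterm; simpl; field; apply R1_neq_R0].
    rewrite Bell_rec2, INR_nsum.
    assert (E : sum_f_R0 (fun k => INR (Nat.mul (binC N k) (Bell k))) N * exp 1
              = sum_f_R0 (fun k => BC N k * (INR (Bell k) * exp 1)) N).
    { rewrite Rmult_comm, scal_sum. apply sum_eq. intros i Hi.
      rewrite mult_INR, INR_bin by exact Hi. ring. }
    rewrite E.
    apply (is_series_ext (fun m => sum_f_R0 (fun k => BC N k * dterm k m) N)).
    + intros m. unfold dterm.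
      replace (INR (S m) ^ S N / INR (fact (S m))) with ((INR m + 1) ^ N / INR (fact m)).
      2:{ rewrite fact_simpl, mult_INR, S_INR. simpl pow. field.
          split; [apply INR_fact_neq_0| pose proof (pos_INR m); lra]. }
      rewrite binomial. unfold Rdiv. rewrite Rmult_comm, scal_sum.
      apply sum_eq. intros i Hi. rewrite pow1. ring.
    + apply series_fsum. intros k Hk. apply series_scal. apply IHN. lia.
Qed.

Lemma dobinski n : is_series (dterm n) (INR (Bell n) * exp 1).
Proof. apply (dob_all n). lia. Qed.


Definition sn (k n : nat) : R := sum_f_R0 (fun i => (-1)^i * BC k i * INR (k - i) ^ n) k.

Lemma st_sn n k : stirling2 n k = / INR (fact k) * sn k n.
Proof. reflexivity. Qed.

Lemma C_S k i : BC (S k) (S i) * INR (S i) = INR (S k) * BC k i.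
Proof.
  unfold Binomial.C. rewrite !fact_simpl, !mult_INR. simpl (S k - S i)%nat.
  field. repeat split; try apply INR_fact_neq_0; apply not_0_INR; lia.
Qed.

Lemma sn_rec k n : sn (S k) (S n) = INR (S k) * (sn (S k) n + sn k n).
Proof.
  unfold sn.
  rewrite (sum_eq _ (fun i => ((-1)^i * BC (S k) i * INR (S k - i) ^ n) * INR (S k)
                     - (-1)^i * (BC (S k) i * INR i) * INR (S k - i) ^ n)).
  2:{ intros i Hi. change (INR (S k - i) ^ S n) with (INR (S k - i) * INR (S k - i) ^ n).
      set (t := INR (S k - i) ^ n). rewrite minus_INR by exact Hi. ring. }
  rewrite minus_sum, <- scal_sum.
  rewrite (decomp_sum (fun i => (-1)^i * (BC (S k) i * INR i) * INR (S k - i) ^ n)) by lia.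
  simpl pred.
  rewrite (sum_eq (fun i => (-1) ^ S i * (BC (S k) (S i) * INR (S i)) * INR (S k - S i) ^ n)
             (fun i => ((-1)^i * BC k i * INR (k - i) ^ n) * - INR (S k))).
  2:{ intros i Hi. rewrite C_S. simpl (S k - S i)%nat. simpl pow at 1. ring. }
  rewrite <- scal_sum. simpl INR at 3. ring.
Qed.

Lemma st_rec n k : stirling2 (S n) (S k) = INR (S k) * stirling2 n (S k) + stirling2 n k.
Proof.
  rewrite !st_sn, sn_rec, fact_simpl, mult_INR. field.
  split; [apply INR_fact_neq_0| apply not_0_INR; lia].
Qed.

Lemma st_n0 n : stirling2 (S n) 0 = 0.
Proof. rewrite st_sn. unfold sn, Binomial.C. simpl. field. Qed.

Lemma st_00 : stirling2 0 0 = 1.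
Proof. rewrite st_sn. unfold sn, Binomial.C. simpl. field. Qed.

Lemma st_0S k : stirling2 0 (S k) = 0.
Proof.
  rewrite st_sn. unfold sn.
  rewrite (sum_eq _ (fun i => BC (S k) i * (-1) ^ i * 1 ^ (S k - i))).
  2:{ intros i Hi. rewrite pow1. simpl pow. ring. }
  rewrite <- binomial. replace (-1 + 1) with 0 by ring. simpl. ring.
Qed.

Lemma st_big : forall n k, (n < k)%nat -> stirling2 n k = 0.
Proof.
  induction n; intros k Hk.
  - destruct k; [lia|]. apply st_0S.
  - destruct k; [lia|]. rewrite st_rec, IHn, IHn by lia. ring.
Qed.

Fixpoint fall (y : R) (k : nat) : R :=
  match k with O => 1 | S k' => fall y k' * (y - INR k') end.

Lemma sum_shift (g : nat -> R) n :
  sum_f_R0 (fun k => g (S k)) n = sum_f_R0 g n + g (S n) - g O.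
Proof.
  rewrite <- tech5. rewrite (decomp_sum g (S n)) by lia. simpl pred. ring.
Qed.

Lemma stir_poly : forall n y, y ^ n = sum_f_R0 (fun k => stirling2 n k * fall y k) n.
Proof.
  induction n; intros y.
  - change (1 = stirling2 0 0 * 1). rewrite st_00. ring.
  - rewrite (decomp_sum _ (S n)) by lia. simpl pred. rewrite st_n0.
    rewrite (sum_eq _ (fun k => INR (S k) * stirling2 n (S k) * fall y (S k)
                               + stirling2 n k * fall y (S k))).
    2:{ intros i Hi. rewrite st_rec. ring. }
    rewrite sum_plus.
    rewrite (sum_shift (fun k => INR k * stirling2 n k * fall y k)).
    rewrite (st_big n (S n)) by lia.
    simpl pow. rewrite IHn, scal_sum.
    rewrite (sum_eq (fun i => stirling2 n i * fall y i * y)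
                    (fun i => INR i * stirling2 n i * fall y i + stirling2 n i * fall y (S i))).
    2:{ intros i Hi. simpl fall. ring. }
    rewrite sum_plus. change (INR 0) with 0. ring.
Qed.

Lemma fall_neg x k : fall (- x) k = (-1) ^ k * pochhammer x k.
Proof.
  induction k; simpl; [ring|]. rewrite IHk. ring.
Qed.

Lemma sign_eq n k : (k <= n)%nat -> (-1) ^ (n + k) = (-1) ^ (n - k).
Proof.
  intros H. replace (n + k)%nat with ((n - k) + k + k)%nat by lia.
  rewrite !pow_add. rewrite Rmult_assoc, <- Rpow_mult_distr.
  replace (-1 * -1) with 1 by ring. rewrite pow1. ring.
Qed.

Lemma rise_poly n x : x ^ n = sum_f_R0 (fun k => (-1) ^ (n - k) * stirling2 n k * pochhammer x k) n.
Proof.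
  replace (x ^ n) with ((-1) ^ n * (- x) ^ n).
  2:{ rewrite <- Rpow_mult_distr. f_equal. ring. }
  rewrite (stir_poly n (- x)), scal_sum. apply sum_eq. intros i Hi.
  rewrite fall_neg, <- sign_eq by exact Hi. rewrite pow_add. ring.
Qed.


Definition hterm (k : nat) := hyp1F1_term (INR k + 1) 2 1.

Lemma poch_fact k m : pochhammer (INR k + 1) m * INR (fact k) = INR (fact (k + m)).
Proof.
  induction m.
  - simpl. rewrite Nat.add_0_r. ring.
  - simpl pochhammer. replace (k + S m)%nat with (S (k + m)) by lia.
    rewrite fact_simpl, mult_INR, <- IHm, S_INR, plus_INR. ring.
Qed.

Lemma poch2 m : pochhammer 2 m = INR (fact (S m)).
Proof.
  replace (S m) with (1 + m)%nat by lia.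
  rewrite <- (poch_fact 1 m). simpl INR. replace (1 + 1) with 2 by ring. simpl. ring.
Qed.

Lemma hterm_eq k m : INR (fact k) * hterm k m = pochhammer (INR m + 1) k / INR (fact (S m)).
Proof.
  unfold hterm, hyp1F1_term. rewrite poch2, pow1.
  pose proof (poch_fact k m) as E1. pose proof (poch_fact m k) as E2.
  rewrite Nat.add_comm in E2. rewrite <- E1 in E2.
  assert (Hf : INR (fact m) <> 0) by apply INR_fact_neq_0.
  assert (Hf2 : INR (fact (S m)) <> 0) by apply INR_fact_neq_0.
  apply (Rmult_eq_reg_r (INR (fact m))); [|exact Hf].
  replace (pochhammer (INR m + 1) k / INR (fact (S m)) * INR (fact m)) with
    (pochhammer (INR m + 1) k * INR (fact m) / INR (fact (S m))) by (field; auto).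
  rewrite E2. field. split; auto.
Qed.

Lemma hterm_BC k m : hterm k m = BC (k + m) k / INR (fact (S m)).
Proof.
  unfold hterm, hyp1F1_term, Binomial.C. rewrite poch2, pow1.
  replace (k + m - k)%nat with m by lia.
  rewrite <- (poch_fact k m). field.
  repeat split; apply INR_fact_neq_0.
Qed.

Lemma BC_pos n i : 0 <= BC n i.
Proof.
  unfold Binomial.C. apply Rmult_le_pos; [apply pos_INR|].
  left. apply Rinv_0_lt_compat. apply Rmult_lt_0_compat; apply INR_fact_lt_0.
Qed.


Lemma sum_ge (f : nat -> R) N i : (forall j, 0 <= f j) -> (i <= N)%nat -> f i <= sum_f_R0 f N.
Proof.
  intros Hp. induction N; intros Hi.
  - replace i with O by lia. simpl. lra.
  - simpl. destruct (Nat.eq_dec i (S N)) as [->|Hne].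
    + pose proof (cond_pos_sum f N Hp). lra.
    + pose proof (IHN ltac:(lia)). pose proof (Hp (S N)). lra.
Qed.

Lemma BC_le n i : (i <= n)%nat -> BC n i <= 2 ^ n.
Proof.
  intros H. replace 2 with (1 + 1) by ring. rewrite binomial.
  rewrite (sum_eq _ (fun j => BC n j)).
  2:{ intros j _. rewrite !pow1. ring. }
  apply sum_ge; [apply BC_pos | exact H].
Qed.

Lemma series_exp2 : is_series (fun j => / INR (fact j) * 2 ^ j) (exp 2).
Proof.
  unfold exp. destruct (exist_exp 2) as [l Hl]. simpl.
  apply is_series_Reals in Hl. exact Hl.
Qed.

Lemma hterm_cv k : ex_series (hterm k).
Proof.
  apply (@ex_series_le R_AbsRing R_CompleteNormedModule (hterm k) (fun m => 2 ^ k * (/ INR (fact m) * 2 ^ m))).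
  - intros m. rewrite hterm_BC.
    assert (Hp : 0 <= BC (k + m) k / INR (fact (S m))).
    { unfold Rdiv. apply Rmult_le_pos; [apply BC_pos|]. left.
      apply Rinv_0_lt_compat, INR_fact_lt_0. }
    change (norm _) with (Rabs (BC (k + m) k / INR (fact (S m)))).
    rewrite Rabs_pos_eq by exact Hp.
    replace (2 ^ k * (/ INR (fact m) * 2 ^ m)) with (/ INR (fact m) * 2 ^ (k + m)) by (rewrite pow_add; ring). unfold Rdiv. rewrite Rmult_comm.
    apply Rmult_le_compat.
    + left. apply Rinv_0_lt_compat, INR_fact_lt_0.
    + apply BC_pos.
    + apply Rinv_le_contravar; [apply INR_fact_lt_0|].
      apply le_INR. rewrite fact_simpl. nia.
    + apply BC_le. lia.
  - exists (2 ^ k * exp 2). apply series_scal. apply series_exp2.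
Qed.


Lemma dob_shift n : (1 <= n)%nat ->
  is_series (fun m => dterm n (S m)) (INR (Bell n) * exp 1).
Proof.
  intros Hn. apply is_series_incr_1.
  assert (H0 : dterm n 0 = 0).
  { unfold dterm. destruct n; [lia|]. simpl. field. }
  rewrite H0.
  match goal with |- is_series _ ?v => replace v with (INR (Bell n) * exp 1) end.
  - apply dobinski.
  - change (INR (Bell n) * exp 1 = Rplus (INR (Bell n) * exp 1) 0). ring.
Qed.

Lemma key_id n m : (1 <= n)%nat ->
  dterm n (S m) = sum_f_R0 (fun j => ((-1) ^ (n - S j) * stirling2 n (S j) * INR (fact (S j)))
                                    * hterm (S j) m) (n - 1).
Proof.
  intros Hn. destruct n as [|n']; [lia|].
  replace (S n' - 1)%nat with n' by lia.
  unfold dterm. rewrite S_INR, rise_poly.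
  rewrite (decomp_sum _ (S n')) by lia. simpl pred. rewrite st_n0.
  unfold Rdiv. rewrite Rmult_0_r, Rmult_0_l, Rplus_0_l.
  rewrite Rmult_comm, scal_sum. apply sum_eq. intros i Hi.
  rewrite !Rmult_assoc, hterm_eq. unfold Rdiv. ring.
Qed.


Theorem main_thm :
  forall n : nat, (1 <= n)%nat ->
  exists F : nat -> R,
    (forall k : nat, infinite_sum (hyp1F1_term (INR k + 1) 2 1) (F k)) /\
    INR (Bell n) =
      / exp 1 *
      sum_f_R0 (fun j => let k := S j in
                  (-1) ^ (n - k) * stirling2 n k * INR (fact k) * F k)
               (n - 1).
Proof.
  intros n Hn.
  exists (fun k => Series (hterm k)).
  split.
  { intros k. apply is_series_Reals. apply (Series_correct (hterm k)). apply hterm_cv. }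
  set (c := fun j => (-1) ^ (n - S j) * stirling2 n (S j) * INR (fact (S j))).
  assert (HS : is_series (fun m => sum_f_R0 (fun j => c j * hterm (S j) m) (n-1))
                          (sum_f_R0 (fun j => c j * Series (hterm (S j))) (n-1))).
  { apply series_fsum. intros k _. apply series_scal.
    apply (Series_correct (hterm (S k))), hterm_cv. }
  assert (HD : is_series (fun m => sum_f_R0 (fun j => c j * hterm (S j) m) (n-1))
                         (INR (Bell n) * exp 1)).
  { apply (is_series_ext (fun m => dterm n (S m))).
    - intros m. unfold c. apply key_id. exact Hn.
    - apply dob_shift. exact Hn. }
  apply is_series_unique in HS. apply is_series_unique in HD.
  change (INR (Bell n) = / exp 1 * sum_f_R0 (fun j => c j * Series (hterm (S j))) (n - 1)).
  rewrite <- HS, HD. field. apply Rgt_not_eq, exp_pos.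
Qed.


End Ana.


Theorem theorem1p1 :
  forall n : nat, (1 <= n)%nat ->
  exists F : nat -> R,
    (forall k : nat, infinite_sum (hyp1F1_term (INR k + 1) 2 1) (F k)) /\
    INR (Bell n) =
      / exp 1 *
      sum_f_R0 (fun j => let k := S j in
                  (-1) ^ (n - k) * stirling2 n k * INR (fact k) * F k)
               (n - 1).
Proof. exact Ana.main_thm. Qed.
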